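(* Let $n,p\ge1$ be integers, let $\mathbf{A}^{p+1}_{n+1}$ be as defined in the context, and let $t_{np}(x)=(n+1).x^{\max\{n+1,p\}}$. Then: (a) for every $a\in A$, $t_{np}(a)\vee\sim t_{np}(a)=\top$ (i.e. $\mathbf{A}^{p+1}_{n+1}\models t_{np}(x)\vee\neg t_{np}(x)\approx\top$); (b) $\mathrm{Rad}(\mathbf{A}^{p+1}_{n+1})=\{a\in A: t_{np}(a)=\top\}=\{a\in A:\ (n+1).a^k=\top\text{ for every integer }k>0\}$; (c) for every integer $k>0$ and every $a\in A$, $(n+1).\big(a\vee\sim(a^p)\big)^k=\top$.
   Context: Order $\mathbb{Z}\times\mathbb{Z}$ lexicographically: $(m,r)\preccurlyeq(k,s)$ iff $m<k$, or $m=k$ and $r\le s$; addition/subtraction of pairs is componentwise, and $\min,\max$ of pairs refer to $\preccurlyeq$. For an integer $n\ge1$ let $L^\omega_{n+1}=\{(m,r)\in\mathbb{Z}^2:(0,0)\preccurlyeq(m,r)\preccurlyeq(n,0)\}$ with $x\ast y=\max\{(0,0),x+y-(n,0)\}$ and $x\to y=\min\{(n,0),(n,0)-x+y\}$. For an integer $p\ge1$ let $L_{p+1}=\{0,1,\dots,p\}$ with $\alpha\ast\beta=\max\{0,\alpha+\beta-p\}$. Define $$A=A^{p+1}_{n+1}=\{\langle(m,r),\alpha\rangle:(m,r)\in L^\omega_{n+1},\ \alpha\in\{0,p\}\}\cup\{\langle(m,r),\alpha\rangle:(0,0)\preccurlyeq(m,r)\preccurlyeq(n-1,0),\ 0<\alpha<p\}.$$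 Order: $\langle(m,r),\alpha\rangle\le\langle(k,s),\beta\rangle$ iff one of: (o1) $\alpha\neq0$, $\alpha\le\beta$ and $(m,r)\preccurlyeq(k,s)$; (o2) $\alpha=\beta=0$ and $(k,s)\preccurlyeq(m,r)$; (o3) $\alpha=0$, $\beta\ne0$ and $(n-1,0)\preccurlyeq(m+k,r+s)$. $\wedge,\vee$ denote meet and join for $\le$. Put $\bot=\langle(n,0),0\rangle$, $\top=\langle(n,0),p\rangle$. For $a=\langle(m,r),\alpha\rangle$, $b=\langle(k,s),\beta\rangle\in A$ define $a\odot b$ by: (P1) if $\alpha,\beta\ge1$ and $\alpha+\beta>p$: $a\odot b=\langle(m,r)\ast(k,s),\alpha+\beta-p\rangle$; (P2) if $\alpha,\beta\ge1$ and $\alpha+\beta\le p$: $a\odot b=\langle\min\{(n,0),(2n-(m+k+1),-(r+s))\},0\rangle$; (P3) if $\alpha\ge1$, $\beta=0$: $a\odot b=\langle(m,r)\to(k,s),0\rangle$, and if $\alpha=0$, $\beta\ge1$: $a\odot b=\langle(k,s)\to(m,r),0\rangle$; (P4) if $\alpha=\beta=0$: $a\odot b=\langle\min\{(n,0),(m+k+1,r+s)\},0\rangle$. Define $\sim\langle(m,r),\alpha\rangle=\langle(m,r),p-\alpha\rangle$ if $\alpha\in\{0,p\}$, and $\sim\langle(m,r),\alpha\rangle=\langle(n-1-m,-r),p-\alpha\rangle$ if $0<\alpha<p$. Define $a\Rightarrow b=\sim(a\odot\sim b)$ (so $\sim a=a\Rightarrow\bot$, interpreting $\neg x=x\to\bot$).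 The algebra $\mathbf{A}^{p+1}_{n+1}$ is $\langle A;\odot,\Rightarrow,\wedge,\vee,\bot,\top\rangle$. Terms: $a^0=\top$, $a^{k+1}=a\odot a^k$; $a\oplus b=\sim(\sim a\odot\sim b)$; $0.a=\bot$, $(k+1).a=a\oplus k.a$. $\mathrm{Rad}$ is the intersection of all maximal proper implicative filters, where an implicative filter is a subset containing $\top$, closed under $\odot$ and upward closed. *)

(* Defs.v *)
From Stdlib Require Import ZArith Lia ClassicalEpsilon Bool.
Local Open Scope bool_scope.
Open Scope Z_scope.

(* An element <(m,r),alpha> is represented by the record (el m r alpha). *)
Record elt := el { em : Z; er : Z; eal : Z }.

Definition elt_inhabited : inhabited elt := inhabits (el 0 0 0).

Definition lexle (m r k s : Z) : Prop := m < k \/ (m = k /\ r <= s).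
Definition lexleb (m r k s : Z) : bool := (m <? k) || ((m =? k) && (r <=? s)).
Definition pmin (x y : Z * Z) : Z * Z :=
  if lexleb (fst x) (snd x) (fst y) (snd y) then x else y.
Definition pmax (x y : Z * Z) : Z * Z :=
  if lexleb (fst x) (snd x) (fst y) (snd y) then y else x.

Section Alg.
Variables n p : nat.
Let N := Z.of_nat n.
Let P := Z.of_nat p.

Definition star (x y : Z * Z) : Z * Z :=
  pmax (0, 0) (fst x + fst y - N, snd x + snd y).
Definition arrow (x y : Z * Z) : Z * Z :=
  pmin (N, 0) (N - fst x + fst y, - snd x + snd y).

Definition inA (a : elt) : Prop :=
  (lexle 0 0 (em a) (er a) /\ lexle (em a) (er a) N 0 /\ (eal a = 0 \/ eal a = P))
  \/ (lexle 0 0 (em a) (er a) /\ lexle (em a) (er a) (N - 1) 0 /\ 0 < eal a < P).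

Definition le (a b : elt) : Prop :=
  (eal a <> 0 /\ eal a <= eal b /\ lexle (em a) (er a) (em b) (er b))
  \/ (eal a = 0 /\ eal b = 0 /\ lexle (em b) (er b) (em a) (er a))
  \/ (eal a = 0 /\ eal b <> 0 /\ lexle (N - 1) 0 (em a + em b) (er a + er b)).

Definition bot : elt := el N 0 0.
Definition top : elt := el N 0 P.

Definition odot (a b : elt) : elt :=
  let m := em a in let r := er a in let al := eal a in
  let k := em b in let s := er b in let be := eal b in
  if (1 <=? al) && (1 <=? be) then
    if P <? al + be then
      let x := star (m, r) (k, s) in el (fst x) (snd x) (al + be - P)
    else
      let x := pmin (N, 0) (2 * N - (m + k + 1), - (r + s)) in el (fst x) (snd x) 0
  else if (1 <=? al) && (be =? 0) then
    let x := arrow (m, r) (k, s) in el (fst x) (snd x) 0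
  else if (al =? 0) && (1 <=? be) then
    let x := arrow (k, s) (m, r) in el (fst x) (snd x) 0
  else
    let x := pmin (N, 0) (m + k + 1, r + s) in el (fst x) (snd x) 0.

Definition neg (a : elt) : elt :=
  let m := em a in let r := er a in let al := eal a in
  if (al =? 0) || (al =? P) then el m r (P - al) else el (N - 1 - m) (- r) (P - al).

Definition imp (a b : elt) : elt := neg (odot a (neg b)).

Definition is_lub (a b c : elt) : Prop :=
  inA c /\ le a c /\ le b c /\ forall u, inA u -> le a u -> le b u -> le c u.
Definition is_glb (a b c : elt) : Prop :=
  inA c /\ le c a /\ le c b /\ forall u, inA u -> le u a -> le u b -> le u c.
Definition join (a b : elt) : elt := epsilon elt_inhabited (is_lub a b).
Definition meet (a b : elt) : elt := epsilon elt_inhabited (is_glb a b).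

Fixpoint pow (a : elt) (k : nat) : elt :=
  match k with O => top | S k' => odot a (pow a k') end.
Definition oplus (a b : elt) : elt := neg (odot (neg a) (neg b)).
Fixpoint times (k : nat) (a : elt) : elt :=
  match k with O => bot | S k' => oplus a (times k' a) end.

Definition tnp (a : elt) : elt := times (S n) (pow a (Nat.max (S n) p)).

Definition impl_filter (F : elt -> Prop) : Prop :=
  (forall a, F a -> inA a) /\ F top /\
  (forall a b, F a -> F b -> F (odot a b)) /\
  (forall a b, F a -> inA b -> le a b -> F b).
Definition proper_filter (F : elt -> Prop) : Prop :=
  impl_filter F /\ exists a, inA a /\ ~ F a.
Definition maximal_filter (F : elt -> Prop) : Prop :=
  proper_filter F /\
  forall G, proper_filter G -> (forall a, F a -> G a) -> forall a, G a -> F a.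
Definition Rad (a : elt) : Prop :=
  inA a /\ forall F, maximal_filter F -> F a.

End Alg.

(* Main.v *)
Require Import Defs.
From Stdlib Require Import ZArith Lia Bool ClassicalEpsilon.
Open Scope Z_scope.

Ltac bsimpl := repeat match goal with
 | H : (_ && _)%bool = true |- _ => apply andb_true_iff in H; destruct H
 | H : (_ || _)%bool = false |- _ => apply orb_false_iff in H; destruct H
 | H : (_ && _)%bool = false |- _ => apply andb_false_iff in H; destruct H
 | H : (_ || _)%bool = true |- _ => apply orb_true_iff in H; destruct H
 | H : (_ <? _) = true |- _ => apply Z.ltb_lt in H
 | H : (_ <? _) = false |- _ => apply Z.ltb_ge in H
 | H : (_ <=? _) = true |- _ => apply Z.leb_le in H
 | H : (_ <=? _) = false |- _ => apply Z.leb_gt in H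
 | H : (_ =? _) = true |- _ => apply Z.eqb_eq in H
 | H : (_ =? _) = false |- _ => apply Z.eqb_neq in H
 end.
Ltac crunch := cbn [fst snd em er eal] in *;
  repeat (match goal with |- context [if ?b then _ else _] => destruct b eqn:? end; bsimpl);
  cbn [fst snd em er eal] in *.
Ltac crunch2 := cbn [fst snd em er eal] in *;
  repeat (match goal with |- context [if ?b then _ else _] => destruct b eqn:?
   | H : context [if ?b then _ else _] |- _ => destruct b eqn:? end; bsimpl);
  cbn [fst snd em er eal] in *.
Ltac unf := unfold odot, star, arrow, pmin, pmax, lexleb, neg, inA, lexle, top, bot in *.

Definition Ph1 (n p : nat) (j : Z) e := 1 <= eal e /\ eal e <= Z.of_nat p - j /\ lexle 0 0 (em e) (er e)
  /\ lexle (em e) (er e) (Z.max 0 (Z.of_nat n - j)) 0.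
Definition Ph2 (n p : nat) (j : Z) e := eal e = 0 /\ lexle (Z.min (Z.of_nat n) (j-1)) 0 (em e) (er e)
  /\ lexle (em e) (er e) (Z.of_nat n) 0.

Lemma S1 n p m r al e J : (1 <= n)%nat -> 1 <= J -> 0 < al < Z.of_nat p -> lexle 0 0 m r ->
  lexle m r (Z.of_nat n - 1) 0 -> Ph1 n p J e ->
  Ph1 n p (J+1) (odot n p (el m r al) e) \/ Ph2 n p (J+1) (odot n p (el m r al) e).
Proof.
  intros. destruct e as [k s g]. unfold Ph1, Ph2 in *. unf. crunch.
  all: first [left; lia | right; lia].
Qed.
Lemma S2 n p m r al e J : (1 <= n)%nat -> 1 <= J -> 0 < al < Z.of_nat p -> lexle 0 0 m r ->
  lexle m r (Z.of_nat n - 1) 0 -> Ph2 n p J e -> Ph2 n p (J+1) (odot n p (el m r al) e).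
Proof. intros. destruct e as [k s g]. unfold Ph1, Ph2 in *. unf. crunch. all: lia. Qed.
Lemma S3 n p m r e J : (1 <= n)%nat -> 1 <= J -> lexle 0 0 m r ->
  lexle m r (Z.of_nat n) 0 -> Ph2 n p J e -> Ph2 n p (J+1) (odot n p (el m r 0) e).
Proof. intros. destruct e as [k s g]. unfold Ph1, Ph2 in *. unf. crunch. all: lia. Qed.
Lemma B1 n p m r al : (1 <= n)%nat -> 0 < al < Z.of_nat p -> lexle 0 0 m r ->
  lexle m r (Z.of_nat n - 1) 0 -> Ph1 n p 1 (odot n p (el m r al) (top n p)).
Proof. intros. unfold Ph1, Ph2 in *. unf. crunch. all: lia. Qed.
Lemma B2 n p m r : (1 <= n)%nat -> (1 <= p)%nat -> lexle 0 0 m r ->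
  lexle m r (Z.of_nat n) 0 -> Ph2 n p 1 (odot n p (el m r 0) (top n p)).
Proof. intros. unfold Ph1, Ph2 in *. unf. crunch. all: lia. Qed.

Lemma pow_inv_nonp n p a (hn : (1 <= n)%nat) (hp : (1 <= p)%nat) :
  inA n p a -> eal a <> Z.of_nat p ->
  forall j, (1 <= j)%nat -> (0 < eal a /\ Ph1 n p (Z.of_nat j) (pow n p a j)) \/ Ph2 n p (Z.of_nat j) (pow n p a j).
Proof.
  intros Ha Hap j Hj. induction j as [|j IH]; [lia|].
  destruct a as [m r al]. unfold inA in Ha; cbn [em er eal] in *.
  destruct (Nat.eq_dec j 0) as [->|Hj0].
  - cbn [pow]. destruct Ha as [(H1&H2&[H3|H3])|(H1&H2&H3)]; [subst al| lia |].
    + right. apply B2; auto.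
    + left. split; [cbn; lia|]. apply B1; auto.
  - specialize (IH ltac:(lia)). cbn [pow]. rewrite Nat2Z.inj_succ. unfold Z.succ.
    assert (1 <= Z.of_nat j) by lia.
    destruct Ha as [(H1&H2&[H3|H3])|(H1&H2&H3)]; [subst al| lia |].
    + right. destruct IH as [IH|IH]; [cbn in IH; lia|]. apply S3; auto.
    + destruct IH as [[_ IH]|IH]; [|right; apply S2; auto].
      destruct (S1 n p m r al _ (Z.of_nat j) hn ltac:(lia) H3 H1 H2 IH); [left; split; [cbn; lia|]|right]; auto.
Qed.

Lemma pow_bot n p a (hn : (1 <= n)%nat) (hp : (1 <= p)%nat) :
  inA n p a -> eal a <> Z.of_nat p -> pow n p a (Nat.max (S n) p) = bot n.
Proof.
  intros Ha Hap. destruct (pow_inv_nonp n p a hn hp Ha Hap (Nat.max (S n) p) ltac:(lia)) as [[_ H]|H];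
  destruct (pow n p a (Nat.max (S n) p)) as [k s g]; unfold Ph1, Ph2, bot, lexle in *; cbn [em er eal] in *.
  - lia.
  - assert (k = Z.of_nat n /\ s = 0) by lia. destruct H0; subst; f_equal; lia.
Qed.

Lemma pow_nonp_p n p a (hn : (1 <= n)%nat) (hp : (1 <= p)%nat) :
  inA n p a -> eal a <> Z.of_nat p -> Ph2 n p (Z.of_nat p) (pow n p a p).
Proof.
  intros Ha Hap. destruct (pow_inv_nonp n p a hn hp Ha Hap p ltac:(lia)) as [[_ H]|H]; auto.
  unfold Ph1 in H. lia.
Qed.

Definition MP (n p : nat) e := eal e = Z.of_nat p /\ lexle 0 0 (em e) (er e) /\ lexle (em e) (er e) (Z.of_nat n) 0.

Lemma MP_inA n p e : (1 <= p)%nat -> MP n p e <-> inA n p e /\ eal e = Z.of_nat p.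
Proof. intros. destruct e; unfold MP, inA, lexle; cbn; split; intros; lia. Qed.

Lemma MP_odot n p a b : (1 <= n)%nat -> (1 <= p)%nat -> MP n p a -> MP n p b -> MP n p (odot n p a b).
Proof. intros. destruct a, b. unfold MP in *. unf. crunch. all: lia. Qed.

Lemma MP_top n p : (1 <= p)%nat -> MP n p (top n p).
Proof. intros. unfold MP, top, lexle; cbn; lia. Qed.

Lemma MP_pow n p a k : (1 <= n)%nat -> (1 <= p)%nat -> MP n p a -> MP n p (pow n p a k).
Proof. intros. induction k; cbn [pow]; [apply MP_top|apply MP_odot]; auto. Qed.

Definition Tj (n p : nat) (j : Z) e := eal e = Z.of_nat p /\ lexle (Z.min (Z.of_nat n) (j-1)) 0 (em e) (er e)
  /\ lexle (em e) (er e) (Z.of_nat n) 0.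

Lemma neg_P n p e : (1 <= p)%nat -> eal e = Z.of_nat p -> neg n p e = el (em e) (er e) 0.
Proof. intros. destruct e as [k s g]; cbn in *; subst. unfold neg; cbn.
  rewrite Z.eqb_refl, orb_true_r. f_equal; lia. Qed.
Lemma neg_0 n p e : eal e = 0 -> neg n p e = el (em e) (er e) (Z.of_nat p).
Proof. intros. destruct e as [k s g]; cbn in *; subst. unfold neg; cbn. f_equal; lia. Qed.
Lemma odot00 n p m r k s : odot n p (el m r 0) (el k s 0) =
  el (fst (pmin (Z.of_nat n, 0) (m+k+1, r+s))) (snd (pmin (Z.of_nat n, 0) (m+k+1, r+s))) 0.
Proof. reflexivity. Qed.

Lemma T_base n p y : (1 <= n)%nat -> (1 <= p)%nat -> MP n p y -> Tj n p 1 (oplus n p y (bot n)).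
Proof. intros. destruct y as [m r g]. unfold oplus, MP in *. cbn [em er eal] in *.
  rewrite (neg_P _ _ (el m r g)) by (cbn; lia). rewrite (neg_0 _ _ (bot n)) by reflexivity.
  cbn [em er eal]. unfold Tj. unf. crunch. all: lia. Qed.

Lemma T_step n p y e J : (1 <= n)%nat -> (1 <= p)%nat -> 1 <= J -> MP n p y -> Tj n p J e ->
  Tj n p (J+1) (oplus n p y e).
Proof. intros. destruct y as [m r g], e as [k s h]. unfold oplus, Tj, MP in *. cbn [em er eal] in *.
  rewrite (neg_P _ _ (el m r g)) by (cbn; lia). rewrite (neg_P _ _ (el k s h)) by (cbn; lia).
  cbn [em er eal]. rewrite odot00, neg_0 by reflexivity. cbn [em er eal eal]. unfold pmin, lexleb, lexle in *.
  crunch. all: lia. Qed.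

Lemma times_MP n p y : (1 <= n)%nat -> (1 <= p)%nat -> MP n p y -> times n p (S n) y = top n p.
Proof.
  intros hn hp Hy.
  assert (H : forall j, (1 <= j)%nat -> Tj n p (Z.of_nat j) (times n p j y)).
  { induction j as [|j IH]; intros Hj; [lia|]. destruct (Nat.eq_dec j 0) as [->|Hj0].
    - cbn [times]. apply T_base; auto.
    - cbn [times]. rewrite Nat2Z.inj_succ. apply T_step; auto. lia. apply IH. lia. }
  specialize (H (S n) ltac:(lia)). destruct (times n p (S n) y) as [k s g].
  unfold Tj, top, lexle in *; cbn [em er eal] in *; rewrite Nat2Z.inj_succ in *. assert (k = Z.of_nat n /\ s = 0) by lia.
  destruct H0; subst; f_equal; lia.
Qed.

Lemma oplus_bot n p : (1 <= n)%nat -> (1 <= p)%nat -> oplus n p (bot n) (bot n) = bot n.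
Proof. intros. unfold oplus. rewrite (neg_0 _ _ (bot n)) by reflexivity. cbn [em er eal].
  unfold bot in *. unfold odot, star, pmax, lexleb. cbn [em er eal] in *. crunch. all: try lia. all: rewrite neg_P by (cbn; lia); cbn; f_equal; lia. Qed.

Lemma times_bot n p k : (1 <= n)%nat -> (1 <= p)%nat -> times n p k (bot n) = bot n.
Proof. intros. induction k; cbn [times]; [reflexivity|]. rewrite IHk. apply oplus_bot; auto. Qed.

Lemma bot_top n p : (1 <= p)%nat -> bot n <> top n p.
Proof. intros H E. unfold bot, top in E. injection E. lia. Qed.

Lemma tnp_cases n p a : (1 <= n)%nat -> (1 <= p)%nat -> inA n p a ->
  (eal a = Z.of_nat p /\ tnp n p a = top n p) \/ (eal a <> Z.of_nat p /\ tnp n p a = bot n).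
Proof.
  intros hn hp Ha. destruct (Z.eq_dec (eal a) (Z.of_nat p)).
  - left. split; auto. unfold tnp. apply times_MP; auto. apply MP_pow; auto. apply MP_inA; auto.
  - right. split; auto. unfold tnp. rewrite pow_bot; auto. apply times_bot; auto.
Qed.

Lemma le_top n p a : (1 <= n)%nat -> (1 <= p)%nat -> inA n p a -> le n a (top n p).
Proof. intros. destruct a as [m r al]. unfold le, inA, top, lexle in *; cbn in *. lia. Qed.
Lemma le_bot n p a : (1 <= n)%nat -> inA n p a -> le n (bot n) a.
Proof. intros. destruct a as [m r al]. unfold le, inA, bot, lexle in *; cbn in *. lia. Qed.
Lemma le_top_eq n p c : (1 <= p)%nat -> inA n p c -> le n (top n p) c -> c = top n p.
Proof. intros. destruct c as [m r al]. unfold le, inA, top, lexle in *; cbn in *.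
  assert (m = Z.of_nat n /\ r = 0 /\ al = Z.of_nat p) as (->&->&->) by lia. reflexivity. Qed.
Lemma le_P n p a b : (1 <= p)%nat -> eal a = Z.of_nat p -> inA n p b -> le n a b -> eal b = Z.of_nat p.
Proof. intros. destruct a, b. unfold le, inA, lexle in *; cbn in *. lia. Qed.
Lemma inA_top n p : (1 <= n)%nat -> inA n p (top n p).
Proof. intros. unfold inA, top, lexle; cbn; lia. Qed.
Lemma inA_bot n p : (1 <= n)%nat -> inA n p (bot n).
Proof. intros. unfold inA, bot, lexle; cbn; lia. Qed.

Lemma filter_pow n p F a k : impl_filter n p F -> F a -> F (pow n p a k).
Proof. intros (H1&H2&H3&H4) Ha. induction k; cbn [pow]; auto. Qed.

Lemma proper_M n p F b : (1 <= n)%nat -> (1 <= p)%nat -> proper_filter n p F -> F b -> eal b = Z.of_nat p.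
Proof.
  intros hn hp [HF (a & Ha & Hna)] Hb. destruct (Z.eq_dec (eal b) (Z.of_nat p)) as [|Hne]; auto.
  exfalso. apply Hna. pose proof HF as (H1&H2&H3&H4).
  assert (F (bot n)). { rewrite <- (pow_bot n p b); auto. apply filter_pow; auto. }
  apply (H4 (bot n)); auto. apply (le_bot n p); auto.
Qed.

Definition Mf (n p : nat) (a : elt) := inA n p a /\ eal a = Z.of_nat p.

Lemma M_proper n p : (1 <= n)%nat -> (1 <= p)%nat -> proper_filter n p (Mf n p).
Proof.
  intros hn hp. split.
  - split; [intros a []; auto|]. split; [split; [apply inA_top; auto|reflexivity]|]. split.
    + intros a b Ha Hb. apply MP_inA; auto. apply MP_odot; auto; apply MP_inA; auto.
    + intros a b [Ha Hpa] Hb Hab. split; auto. eapply le_P; eauto.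
  - exists (bot n). split; [apply inA_bot; auto|]. intros [_ H]. cbn in H. lia.
Qed.

Lemma M_max n p : (1 <= n)%nat -> (1 <= p)%nat -> maximal_filter n p (Mf n p).
Proof.
  intros hn hp. split; [apply M_proper; auto|]. intros G HG _ a Ga. split.
  - destruct HG as [(H1&_) _]. auto.
  - apply (proper_M n p G a); auto.
Qed.

Lemma Rad_iff n p a : (1 <= n)%nat -> (1 <= p)%nat -> inA n p a -> (Rad n p a <-> eal a = Z.of_nat p).
Proof.
  intros hn hp Ha. split.
  - intros [_ HR]. apply (HR (Mf n p)). apply M_max; auto.
  - intros He. split; auto. intros F [HFp HFm]. apply (HFm (Mf n p)); [apply M_proper; auto| |split; auto].
    intros b Fb. split; [destruct HFp as [(H1&_) _]; auto|]. apply (proper_M n p F b); auto.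
Qed.

Lemma join_spec n p x y : (exists c, is_lub n p x y c) -> is_lub n p x y (join n p x y).
Proof. intros H. unfold join. apply epsilon_spec. exact H. Qed.

Lemma is_lub_sym n p x y c : is_lub n p x y c -> is_lub n p y x c.
Proof. intros (H1&H2&H3&H4). split; [auto|split; [auto|split; [auto|]]]. intros u Hu A B. apply H4; auto. Qed.

Lemma join_top_r n p x : (1 <= n)%nat -> (1 <= p)%nat -> inA n p x -> join n p x (top n p) = top n p.
Proof.
  intros hn hp Hx. assert (H : is_lub n p x (top n p) (top n p)).
  { split; [apply inA_top; auto|]. split; [apply le_top; auto|]. split; [apply le_top; auto; apply inA_top; auto|].
    intros; auto. }
  pose proof (join_spec n p x (top n p) (ex_intro _ _ H)) as (A&B&C&D).
  apply le_top_eq; auto.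
Qed.

Lemma join_top_l n p x : (1 <= n)%nat -> (1 <= p)%nat -> inA n p x -> join n p (top n p) x = top n p.
Proof.
  intros hn hp Hx. assert (H : is_lub n p (top n p) x (top n p)).
  { split; [apply inA_top; auto|]. split; [apply le_top; auto; apply inA_top; auto|]. split; [apply le_top; auto|].
    intros; auto. }
  pose proof (join_spec n p (top n p) x (ex_intro _ _ H)) as (A&B&C&D).
  apply le_top_eq; auto.
Qed.

Lemma lub_exists n p x y : (1 <= n)%nat -> (1 <= p)%nat -> inA n p x -> MP n p y ->
  exists c, is_lub n p x y c.
Proof.
  intros hn hp Hx Hy. destruct x as [m r al], y as [k s g]. unfold MP in Hy; cbn [em er eal] in Hy.
  destruct (Z.eq_dec al 0) as [->|Hal].
  - set (q := pmax (k, s) (pmax (0, 0) (Z.of_nat n - 1 - m, - r))).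
    exists (el (fst q) (snd q) (Z.of_nat p)). subst q.
    unfold is_lub. split; [|split; [|split]].
    + unfold inA in *. unfold pmax, lexleb, lexle in *. crunch2. all: lia.
    + unfold le, inA in *. unfold pmax, lexleb, lexle in *. crunch2. all: lia.
    + unfold le, inA in *. unfold pmax, lexleb, lexle in *. crunch2. all: lia.
    + intros [m' r' al'] Hu H1 H2.
      assert (Hal' : al' <= Z.of_nat p) by (unfold inA, lexle in Hu |- *; cbn [em er eal] in *; lia).
      assert (E : al' = Z.of_nat p /\ lexle k s m' r') by (clear H1 Hx Hu; unfold le, lexle in *; cbn [em er eal] in *; lia).
      assert (F : lexle (Z.of_nat n - 1) 0 (m + m') (r + r')) by (clear H2 Hx Hu; unfold le, lexle in *; cbn [em er eal] in *; lia).
      assert (G : lexle 0 0 m' r') by (unfold inA, lexle in Hu |- *; cbn [em er eal] in *; lia).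
      clear H1 H2 Hu Hx. unfold le; cbn [em er eal]. left. split; [lia|split; [lia|]].
      unfold pmax, lexleb, lexle in *. crunch2. all: lia.
  - set (q := pmax (m, r) (k, s)).
    exists (el (fst q) (snd q) (Z.of_nat p)). subst q.
    unfold is_lub. split; [|split; [|split]].
    + unfold inA in *. unfold pmax, lexleb, lexle in *. crunch2. all: lia.
    + unfold le, inA in *. unfold pmax, lexleb, lexle in *. crunch2. all: lia.
    + unfold le, inA in *. unfold pmax, lexleb, lexle in *. crunch2. all: lia.
    + intros [m' r' al'] Hu H1 H2.
      assert (Hal' : al' <= Z.of_nat p) by (unfold inA, lexle in Hu |- *; cbn [em er eal] in *; lia).
      assert (E : al' = Z.of_nat p /\ lexle k s m' r') by (clear H1 Hx Hu; unfold le, lexle in *; cbn [em er eal] in *; lia).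
      assert (F : lexle m r m' r') by (clear H2 Hx Hu; unfold le, lexle in *; cbn [em er eal] in *; lia).
      clear H1 H2 Hu Hx. unfold le; cbn [em er eal]. left. split; [lia|split; [lia|]].
      unfold pmax, lexleb, lexle in *. crunch2. all: lia.
Qed.

Lemma partc n p k a : (1 <= n)%nat -> (1 <= p)%nat -> inA n p a ->
  times n p (S n) (pow n p (join n p a (neg n p (pow n p a p))) k) = top n p.
Proof.
  intros hn hp Ha. set (b := neg n p (pow n p a p)).
  assert (Hc : MP n p (join n p a b)).
  { destruct (Z.eq_dec (eal a) (Z.of_nat p)) as [He|He].
    - assert (Hp : MP n p (pow n p a p)) by (apply MP_pow; auto; apply MP_inA; auto).
      assert (Hb : inA n p b).
      { subst b. rewrite neg_P by (auto; apply Hp). destruct Hp as (H1&H2&H3). clear Ha.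
        unfold inA, lexle in *; cbn [em er eal]; lia. }
      assert (Ha' : MP n p a) by (apply MP_inA; auto).
      destruct (lub_exists n p b a hn hp Hb Ha') as [c Hc].
      pose proof (join_spec n p a b (ex_intro _ c (is_lub_sym _ _ _ _ _ Hc))) as (A&B&C&D).
      apply MP_inA; auto. split; auto. apply (le_P n p a); auto.
    - pose proof (pow_nonp_p n p a hn hp Ha He) as Hp.
      assert (Hb : MP n p b).
      { subst b. rewrite neg_0 by apply Hp. destruct Hp as (H1&H2&H3). clear Ha.
        unfold MP, lexle in *; cbn [em er eal]; lia. }
      destruct (lub_exists n p a b hn hp Ha Hb) as [c Hc].
      pose proof (join_spec n p a b (ex_intro _ c Hc)) as (A&B&C&D).
      apply MP_inA; auto. split; auto. apply (le_P n p b); auto; apply Hb. }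
  apply times_MP; auto. apply MP_pow; auto.
Qed.

Theorem theorem3p6 (n p : nat) (hn : (1 <= n)%nat) (hp : (1 <= p)%nat) :
  (* (a) *)
  (forall a, inA n p a -> join n p (tnp n p a) (neg n p (tnp n p a)) = top n p) /\
  (* (b) *)
  (forall a, inA n p a ->
     (Rad n p a <-> tnp n p a = top n p) /\
     (tnp n p a = top n p <->
        forall k : nat, (0 < k)%nat -> times n p (S n) (pow n p a k) = top n p)) /\
  (* (c) *)
  (forall (k : nat) a, (0 < k)%nat -> inA n p a ->
     times n p (S n) (pow n p (join n p a (neg n p (pow n p a p))) k) = top n p).
Proof.
  split; [|split].
  - intros a Ha. destruct (tnp_cases n p a hn hp Ha) as [[_ E]|[_ E]]; rewrite E.
    + rewrite neg_P by (auto; cbn; reflexivity). apply join_top_l; auto.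
      unfold inA; cbn; unfold lexle; lia.
    + rewrite neg_0 by reflexivity. apply join_top_r; auto. apply inA_bot; auto.
  - intros a Ha. split.
    + rewrite Rad_iff by auto. destruct (tnp_cases n p a hn hp Ha) as [[H1 E]|[H1 E]]; rewrite E.
      * tauto.
      * split; intros; [contradiction|]. exfalso; apply (bot_top n p hp); auto.
    + split.
      * intros E k Hk. destruct (tnp_cases n p a hn hp Ha) as [[H1 _]|[H1 E']].
        -- apply times_MP; auto. apply MP_pow; auto. apply MP_inA; auto.
        -- rewrite E' in E. exfalso; apply (bot_top n p hp); auto.
      * intros H. apply H. lia.
  - intros k a _ Ha. apply partc; auto.
Qed.
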